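(* Consider the optimization problem $$\mathcal{P}_1:\ \min_{\{I_{G,i},I_{H,i},I_{D,i},p_{G,i},p_{H,i}\}_{i=1}^N}\ \sum_{n=1}^N \big(w_G\, p_{G,n}\tau + w_D I_{D,n}\big)$$ subject to, for all $i\in\mathcal{N}=\{1,\dots,N\}$: $I_{G,i}+I_{H,i}+I_{D,i}=1$; $\sum_{l=1}^{i} p_{H,l}\tau\le \sum_{n=1}^{i}E_{H,n}$; $\sum_{j\in\{G,H\}} I_{j,i}\, r(p_{j,i},h_{j,i})\ge (1-I_{D,i})R$; $0\le p_{j,i}\le p_j^{\max}$ for $j\in\{G,H\}$; $I_{j,i}\in\{0,1\}$ for $j\in\{G,H,D\}$. Consider also the zero-one integer program $$\hat{\mathcal{P}}_1:\ \min_{\{\alpha_i\}}\ \sum_{n=1}^N (1-\alpha_n)c_n\quad\text{s.t.}\quad \sum_{k=1}^{i}\alpha_k p^{inv}_{H,k}\tau\le\sum_{l=1}^{i}E_{H,l},\ \ \alpha_i p^{inv}_{H,i}\le p_H^{\max},\ \ \alpha_i\in\{0,1\},\ \ \forall i\in\mathcal{N},$$ where $p^{inv}_{j,i}=(2^{R/(W\tau)}-1)\sigma^2 h_{j,i}^{-1}$ for $j\in\{G,H\}$, $\kappa=\min\{p_G^{\max},\,w_D(w_G\tau)^{-1}\}$, and $c_i=w_D$ if $p^{inv}_{G,i}>\kappa$ and $c_i=w_G p^{inv}_{G,i}\tau$ if $p^{inv}_{G,i}\le\kappa$. Then $\mathcal{P}_1$ is equivalent to $\hat{\mathcal{P}}_1$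 in the following sense: for any feasible $\{\alpha_i\}$ of $\hat{\mathcal{P}}_1$, the assignment $I_{H,i}=\alpha_i$, $I_{G,i}=(1-\alpha_i)\mathbf{1}\{p^{inv}_{G,i}\le\kappa\}$, $I_{D,i}=1-I_{G,i}-I_{H,i}$, $p_{j,i}=I_{j,i}p^{inv}_{j,i}$ ($j\in\{G,H\}$) is the corresponding solution of $\mathcal{P}_1$; the two problems have the same optimal value; and if $\{\alpha_i\}$ is optimal for $\hat{\mathcal{P}}_1$, then the corresponding $\{I_{G,i},I_{H,i},I_{D,i}\}$, $\{p_{H,i}\}$, $\{p_{G,i}\}$ are optimal for $\mathcal{P}_1$.
   Context: A hybrid energy supply network: a grid-powered base station (GP-BS, index $G$) and an energy-harvesting base station (EH-BS, index $H$) serve one user over $N$ blocks of length $\tau>0$. In each block one packet of $R>0$ bits arrives; it is sent by the GP-BS ($I_{G,i}=1$), by the EH-BS ($I_{H,i}=1$), or dropped ($I_{D,i}=1$). $p_{G,i},p_{H,i}\ge 0$ are transmit powers, $p_G^{\max},p_H^{\max}>0$ peak powers, $E_{H,i}\ge0$ is the energy harvested by the EH-BS at the start of block $i$, $h_{G,i},h_{H,i}>0$ are the channel gains, and $r(p,h)=\tau W\log_2(1+h\sigma^{-2}p)$ with bandwidth $W>0$ and noise variance $\sigma^2>0$. The weights satisfy $w_G,w_D>0$. $\mathbf{1}\{\cdot\}$ is the indicator function. *)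

(* Defs.v *)
From Stdlib Require Import Reals Lra.
Open Scope R_scope.

(* Blocks are indexed 0,...,N-1 (paper: 1,...,N).
   sumR f n = f 0 + ... + f (n-1). *)
Fixpoint sumR (f : nat -> R) (n : nat) : R :=
  match n with
  | O => 0
  | S m => sumR f m + f m
  end.

Definition log2 (x : R) : R := ln x / ln 2.

Definition rate (tau W sig2 : R) (p h : R) : R :=
  tau * W * log2 (1 + h * / sig2 * p).

Definition binary (x : R) : Prop := x = 0 \/ x = 1.

Definition P1_feasible (N : nat) (tau W sig2 Rb pGmax pHmax : R)
    (EH hG hH : nat -> R) (IG IH ID pG pH : nat -> R) : Prop :=
  forall i, (i < N)%nat ->
    IG i + IH i + ID i = 1 /\
    sumR (fun l => pH l * tau) (S i) <= sumR EH (S i) /\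
    IG i * rate tau W sig2 (pG i) (hG i) + IH i * rate tau W sig2 (pH i) (hH i)
      >= (1 - ID i) * Rb /\
    0 <= pG i <= pGmax /\ 0 <= pH i <= pHmax /\
    binary (IG i) /\ binary (IH i) /\ binary (ID i).

Definition P1_obj (N : nat) (tau wG wD : R) (ID pG : nat -> R) : R :=
  sumR (fun n => wG * pG n * tau + wD * ID n) N.

Definition pinv (tau W sig2 Rb : R) (h : R) : R :=
  (Rpower 2 (Rb / (W * tau)) - 1) * sig2 * / h.

Definition kappa (tau pGmax wG wD : R) : R := Rmin pGmax (wD * / (wG * tau)).

Definition cost (tau W sig2 Rb pGmax wG wD : R) (hG : nat -> R) (i : nat) : R :=
  if Rle_dec (pinv tau W sig2 Rb (hG i)) (kappa tau pGmax wG wD)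
  then wG * pinv tau W sig2 Rb (hG i) * tau
  else wD.

Definition hatP1_feasible (N : nat) (tau W sig2 Rb pHmax : R)
    (EH hH : nat -> R) (alpha : nat -> R) : Prop :=
  forall i, (i < N)%nat ->
    sumR (fun k => alpha k * pinv tau W sig2 Rb (hH k) * tau) (S i) <= sumR EH (S i) /\
    alpha i * pinv tau W sig2 Rb (hH i) <= pHmax /\
    binary (alpha i).

Definition hatP1_obj (N : nat) (tau W sig2 Rb pGmax wG wD : R) (hG : nat -> R)
    (alpha : nat -> R) : R :=
  sumR (fun n => (1 - alpha n) * cost tau W sig2 Rb pGmax wG wD hG n) N.

Definition corr_IH (alpha : nat -> R) : nat -> R := fun i => alpha i.

Definition corr_IG (tau W sig2 Rb pGmax wG wD : R) (hG : nat -> R)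
    (alpha : nat -> R) : nat -> R :=
  fun i => (1 - alpha i) *
    (if Rle_dec (pinv tau W sig2 Rb (hG i)) (kappa tau pGmax wG wD) then 1 else 0).

Definition corr_ID (tau W sig2 Rb pGmax wG wD : R) (hG : nat -> R)
    (alpha : nat -> R) : nat -> R :=
  fun i => 1 - corr_IG tau W sig2 Rb pGmax wG wD hG alpha i - corr_IH alpha i.

Definition corr_pG (tau W sig2 Rb pGmax wG wD : R) (hG : nat -> R)
    (alpha : nat -> R) : nat -> R :=
  fun i => corr_IG tau W sig2 Rb pGmax wG wD hG alpha i * pinv tau W sig2 Rb (hG i).

Definition corr_pH (tau W sig2 Rb : R) (hH : nat -> R)
    (alpha : nat -> R) : nat -> R :=
  fun i => corr_IH alpha i * pinv tau W sig2 Rb (hH i).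

(* Main.v *)
Require Import Defs.
From Stdlib Require Import Reals Lra Lia List Classical.
Open Scope R_scope.

Lemma exp_mono x y : x <= y -> exp x <= exp y.
Proof. intro H; destruct (Rle_lt_or_eq_dec _ _ H) as [h|h].
  left; now apply exp_increasing. subst; lra. Qed.

Lemma ln2_pos : 0 < ln 2.
Proof. pose proof ln_lt_2; lra. Qed.

Lemma sumR_ext f g n : (forall i, (i < n)%nat -> f i = g i) -> sumR f n = sumR g n.
Proof. induction n; simpl; intros H; auto. rewrite IHn by (intros; apply H; lia).
  rewrite H by lia; auto. Qed.

Lemma sumR_le f g n : (forall i, (i < n)%nat -> f i <= g i) -> sumR f n <= sumR g n.
Proof. induction n; simpl; intros H; [lra|].
  pose proof (IHn ltac:(intros; apply H; lia)). pose proof (H n ltac:(lia)). lra. Qed.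

Lemma pinv_nonneg tau W sig2 Rb h : 0 < tau -> 0 < W -> 0 < sig2 -> 0 < Rb -> 0 < h ->
  0 <= pinv tau W sig2 Rb h.
Proof. intros. unfold pinv, Rpower.
  assert (1 <= exp (Rb / (W * tau) * ln 2)).
  { rewrite <- exp_0. apply exp_mono. pose proof ln2_pos.
    assert (0 < Rb / (W*tau)) by (apply Rdiv_lt_0_compat; nra). nra. }
  assert (0 < / h) by (apply Rinv_0_lt_compat; lra).
  apply Rmult_le_pos; [apply Rmult_le_pos|]; lra. Qed.

Lemma rate_pinv tau W sig2 Rb h : 0 < tau -> 0 < W -> 0 < sig2 -> 0 < h ->
  rate tau W sig2 (pinv tau W sig2 Rb h) h = Rb.
Proof. intros. unfold rate, pinv, log2.
  replace (1 + h * / sig2 * ((Rpower 2 (Rb / (W * tau)) - 1) * sig2 * / h))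
    with (Rpower 2 (Rb / (W * tau))) by (field; lra).
  unfold Rpower. rewrite ln_exp. pose proof ln2_pos. field; lra. Qed.

Lemma rate_ge tau W sig2 Rb h p : 0 < tau -> 0 < W -> 0 < sig2 -> 0 < h -> 0 <= p ->
  rate tau W sig2 p h >= Rb -> pinv tau W sig2 Rb h <= p.
Proof. intros. unfold rate, pinv, log2 in *. pose proof ln2_pos.
  set (X := 1 + h * / sig2 * p) in *.
  assert (0 < X). { unfold X. assert (0 < /sig2) by (apply Rinv_0_lt_compat; lra).
    assert (0 <= h * /sig2 * p) by (apply Rmult_le_pos; nra). lra. }
  set (L := ln X) in *.
  assert (Rb / (W * tau) * ln 2 <= L).
  { replace L with ((tau*W*(L/ln 2)) * (ln 2/(tau*W))) by (field; lra).
    replace (Rb / (W * tau) * ln 2) with (Rb * (ln 2/(tau*W))) by (field; lra).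
    apply Rmult_le_compat_r. apply Rlt_le, Rdiv_lt_0_compat; nra. lra. }
  apply exp_mono in H7. unfold L in H7. rewrite exp_ln in H7 by lra.
  replace p with ((X - 1) * sig2 * / h) by (unfold X; field; lra).
  unfold Rpower. assert (0 < /h) by (apply Rinv_0_lt_compat; lra).
  apply Rmult_le_compat_r; [lra|]. apply Rmult_le_compat_r; lra. Qed.

Lemma term_lb (tau W sig2 Rb pGmax pHmax wG wD hGi hHi IG IH ID pG pH : R) :
  0 < tau -> 0 < W -> 0 < sig2 -> 0 < Rb -> 0 < wG -> 0 < wD -> 0 < hGi -> 0 < hHi ->
  IG + IH + ID = 1 ->
  IG * rate tau W sig2 pG hGi + IH * rate tau W sig2 pH hHi >= (1 - ID) * Rb ->
  0 <= pG <= pGmax -> 0 <= pH <= pHmax -> binary IG -> binary IH -> binary ID ->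
  IH * pinv tau W sig2 Rb hHi <= pH /\
  (1 - IH) * (if Rle_dec (pinv tau W sig2 Rb hGi) (kappa tau pGmax wG wD)
              then wG * pinv tau W sig2 Rb hGi * tau else wD)
    <= wG * pG * tau + wD * ID.
Proof.
  intros Ht HW Hs HR HwG HwD HhG HhH Hsum Hrate HpG HpH BG BH BD.
  assert (Hq : wD * / (wG * tau) * (wG * tau) = wD) by (field; lra).
  assert (HwGt : 0 < wG * tau) by nra.
  assert (0 <= wG * pG * tau) by (apply Rmult_le_pos; nra).
  pose proof (pinv_nonneg tau W sig2 Rb hGi Ht HW Hs HR HhG).
  pose proof (pinv_nonneg tau W sig2 Rb hHi Ht HW Hs HR HhH).
  destruct BG as [->| ->]; destruct BH as [->| ->]; destruct BD as [->| ->]; try lra.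
  - (* ID = 1 *)
    split; [lra|]. destruct Rle_dec as [h|h]; [|lra].
    unfold kappa in h. pose proof (Rmin_r pGmax (wD * / (wG * tau))).
    assert (wG * pinv tau W sig2 Rb hGi * tau <= wD * / (wG * tau) * (wG * tau)) by nra.
    lra.
  - (* IH = 1 *)
    split; [|lra]. 
    replace (0 * rate tau W sig2 pG hGi + 1 * rate tau W sig2 pH hHi) with
      (rate tau W sig2 pH hHi) in Hrate by ring.
    assert (pinv tau W sig2 Rb hHi <= pH) by (apply rate_ge; lra). lra.
  - (* IG = 1 *)
    split; [lra|].
    assert (Hp : pinv tau W sig2 Rb hGi <= pG).
    { replace (1 * rate tau W sig2 pG hGi + 0 * rate tau W sig2 pH hHi) with
      (rate tau W sig2 pG hGi) in Hrate by ring. apply rate_ge; lra. }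
    destruct Rle_dec as [h|h].
    { assert (wG * pinv tau W sig2 Rb hGi * tau <= wG * pG * tau)
        by (apply Rmult_le_compat_r; [lra|]; apply Rmult_le_compat_l; lra). lra. }
    unfold kappa, Rmin in h. destruct Rle_dec in h; [lra|].
    assert (wD * / (wG * tau) * (wG * tau) < pinv tau W sig2 Rb hGi * (wG*tau))
      by (apply Rmult_lt_compat_r; lra).
    assert (pinv tau W sig2 Rb hGi * (wG*tau) <= pG * (wG*tau))
      by (apply Rmult_le_compat_r; lra).
    lra.
Qed.

Fixpoint enum (n : nat) : list (nat -> R) :=
  match n with
  | O => (fun _ => 0) :: nil
  | S m => map (fun g => fun i => if Nat.eq_dec i m then 0 else g i) (enum m)
        ++ map (fun g => fun i => if Nat.eq_dec i m then 1 else g i) (enum m)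
  end.

Lemma enum_complete n alpha : (forall i, (i < n)%nat -> binary (alpha i)) ->
  exists g, In g (enum n) /\ forall i, (i < n)%nat -> g i = alpha i.
Proof.
  revert alpha; induction n; intros alpha H.
  - exists (fun _ => 0). split; [left; auto| intros; lia].
  - destruct (IHn alpha ltac:(intros; apply H; lia)) as [g [Hg He]].
    destruct (H n ltac:(lia)) as [h|h].
    + exists (fun i => if Nat.eq_dec i n then 0 else g i). split.
      * simpl; apply in_or_app; left; apply (in_map (fun g => fun i => if Nat.eq_dec i n then 0 else g i)); auto.
      * intros i Hi. destruct Nat.eq_dec; [subst; auto|apply He; lia].
    + exists (fun i => if Nat.eq_dec i n then 1 else g i). split.
      * simpl; apply in_or_app; right; apply (in_map (fun g => fun i => if Nat.eq_dec i n then 1 else g i)); auto.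
      * intros i Hi. destruct Nat.eq_dec; [subst; auto|apply He; lia].
Qed.

Lemma list_min {A} (P : A -> Prop) (f : A -> R) (L : list A) :
  (exists x, In x L /\ P x) ->
  exists x, In x L /\ P x /\ forall y, In y L -> P y -> f x <= f y.
Proof.
  induction L as [|a L IH]; intros [x [Hx Px]]; [destruct Hx|].
  destruct (classic (exists x, In x L /\ P x)) as [Hc|Hc].
  - destruct (IH Hc) as [m [Hm [Pm Hmin]]].
    destruct (classic (P a /\ f a <= f m)) as [[Pa Ha]|Hn].
    + exists a. split; [left; auto|]. split; auto.
      intros y [<-|Hy] Py; [lra|]. pose proof (Hmin y Hy Py); lra.
    + exists m. split; [right; auto|]. split; auto.
      intros y [Ey|Hy] Py; [subst y|auto]. destruct (Rle_dec (f m) (f a)) as [r|r]; auto.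
      exfalso; apply Hn; split; auto; lra.
  - destruct Hx as [Ex|Hx]; [subst x|exfalso; apply Hc; eauto].
    exists a. split; [left; auto|]. split; auto.
    intros y [Ey|Hy] Py; [subst y; lra|]. exfalso; apply Hc; eauto.
Qed.

Ltac simp := repeat (rewrite ?Rminus_0_r, ?Rminus_diag, ?Rmult_1_l, ?Rmult_1_r, ?Rmult_0_l, ?Rmult_0_r, ?Rplus_0_l, ?Rplus_0_r).

Lemma part_i (N : nat) (tau W sig2 Rb pGmax pHmax wG wD : R) (EH hG hH : nat -> R)
    (Htau : 0 < tau) (HW : 0 < W) (Hsig2 : 0 < sig2) (HRb : 0 < Rb)
    (HpGmax : 0 < pGmax) (HpHmax : 0 < pHmax) (HwG : 0 < wG) (HwD : 0 < wD)
    (HhG : forall i, (i < N)%nat -> 0 < hG i)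
    (HhH : forall i, (i < N)%nat -> 0 < hH i) alpha :
     hatP1_feasible N tau W sig2 Rb pHmax EH hH alpha ->
     P1_feasible N tau W sig2 Rb pGmax pHmax EH hG hH
       (corr_IG tau W sig2 Rb pGmax wG wD hG alpha) (corr_IH alpha)
       (corr_ID tau W sig2 Rb pGmax wG wD hG alpha)
       (corr_pG tau W sig2 Rb pGmax wG wD hG alpha) (corr_pH tau W sig2 Rb hH alpha)
     /\ P1_obj N tau wG wD (corr_ID tau W sig2 Rb pGmax wG wD hG alpha)
          (corr_pG tau W sig2 Rb pGmax wG wD hG alpha)
        = hatP1_obj N tau W sig2 Rb pGmax wG wD hG alpha.
Proof.
  intros H. split.
  - intros i Hi. destruct (H i Hi) as [He [Hp Hb]].
    pose proof (rate_pinv tau W sig2 Rb (hG i) Htau HW Hsig2 (HhG i Hi)) as RG.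
    pose proof (rate_pinv tau W sig2 Rb (hH i) Htau HW Hsig2 (HhH i Hi)) as RH.
    pose proof (pinv_nonneg tau W sig2 Rb (hG i) Htau HW Hsig2 HRb (HhG i Hi)).
    pose proof (pinv_nonneg tau W sig2 Rb (hH i) Htau HW Hsig2 HRb (HhH i Hi)).
    split; [unfold corr_ID; lra|].
    split; [unfold corr_pH, corr_IH; exact He|].
    unfold corr_pG, corr_pH, corr_ID, corr_IG, corr_IH in *; cbv beta in *.
    pose proof (Rmin_l pGmax (wD * / (wG * tau))).
    destruct Rle_dec as [hk|hk]; unfold kappa in *; destruct Hb as [Ha|Ha]; rewrite Ha in *; simp;
      rewrite ?RG, ?RH; simp; unfold binary; repeat split.
  all: lra.
  - unfold P1_obj, hatP1_obj. apply sumR_ext. intros i Hi.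
    destruct (H i Hi) as [_ [_ Hb]].
    unfold corr_pG, corr_ID, corr_IG, corr_IH, cost.
    destruct Rle_dec; destruct Hb as [Ha|Ha]; rewrite Ha; ring.
Qed.

Lemma lower (N : nat) (tau W sig2 Rb pGmax pHmax wG wD : R) (EH hG hH : nat -> R)
    (Htau : 0 < tau) (HW : 0 < W) (Hsig2 : 0 < sig2) (HRb : 0 < Rb)
    (HwG : 0 < wG) (HwD : 0 < wD)
    (HhG : forall i, (i < N)%nat -> 0 < hG i)
    (HhH : forall i, (i < N)%nat -> 0 < hH i) IG IH ID pG pH :
  P1_feasible N tau W sig2 Rb pGmax pHmax EH hG hH IG IH ID pG pH ->
  hatP1_feasible N tau W sig2 Rb pHmax EH hH IH /\
  hatP1_obj N tau W sig2 Rb pGmax wG wD hG IH <= P1_obj N tau wG wD ID pG.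
Proof.
  intros H.
  assert (T : forall i, (i < N)%nat ->
    binary (IH i) /\ 0 <= pH i <= pHmax /\
    IH i * pinv tau W sig2 Rb (hH i) <= pH i /\
    (1 - IH i) * cost tau W sig2 Rb pGmax wG wD hG i <= wG * pG i * tau + wD * ID i).
  { intros i Hi. destruct (H i Hi) as [S1 [_ [S3 [S4 [S5 [B1 [B2 B3]]]]]]].
    destruct (term_lb tau W sig2 Rb pGmax pHmax wG wD (hG i) (hH i) (IG i) (IH i) (ID i)
      (pG i) (pH i) Htau HW Hsig2 HRb HwG HwD (HhG i Hi) (HhH i Hi) S1 S3 S4 S5 B1 B2 B3).
    unfold cost. auto. }
  split.
  - intros i Hi. destruct (T i Hi) as [B [Pb [Hl _]]]. split; [|split; [lra|auto]].
    destruct (H i Hi) as [_ [E _]].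
    eapply Rle_trans; [|exact E]. apply sumR_le. intros k Hk.
    destruct (T k ltac:(lia)) as [_ [_ [Hk2 _]]]. apply Rmult_le_compat_r; lra.
  - apply sumR_le. intros i Hi. apply (T i Hi).
Qed.

Lemma hat_ext N tau W sig2 Rb pGmax pHmax wG wD EH hG hH a g :
  (forall i, (i < N)%nat -> g i = a i) ->
  (hatP1_feasible N tau W sig2 Rb pHmax EH hH a ->
   hatP1_feasible N tau W sig2 Rb pHmax EH hH g) /\
  hatP1_obj N tau W sig2 Rb pGmax wG wD hG g = hatP1_obj N tau W sig2 Rb pGmax wG wD hG a.
Proof.
  intros E. split.
  - intros H i Hi. destruct (H i Hi) as [H1 [H2 H3]]. rewrite E by lia.
    split; [|auto]. erewrite sumR_ext; [exact H1|]. intros k Hk. rewrite E by lia; auto.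
  - apply sumR_ext. intros k Hk. rewrite E by lia; auto.
Qed.

Theorem lemma1 (N : nat) (tau W sig2 Rb pGmax pHmax wG wD : R)
    (EH hG hH : nat -> R)
    (Htau : 0 < tau) (HW : 0 < W) (Hsig2 : 0 < sig2) (HRb : 0 < Rb)
    (HpGmax : 0 < pGmax) (HpHmax : 0 < pHmax) (HwG : 0 < wG) (HwD : 0 < wD)
    (HEH : forall i, (i < N)%nat -> 0 <= EH i)
    (HhG : forall i, (i < N)%nat -> 0 < hG i)
    (HhH : forall i, (i < N)%nat -> 0 < hH i) :
  (* (i) every feasible alpha of hat P1 yields, via the assignment,
         a feasible solution of P1 with the same objective value *)
  (forall alpha : nat -> R,
     hatP1_feasible N tau W sig2 Rb pHmax EH hH alpha ->
     P1_feasible N tau W sig2 Rb pGmax pHmax EH hG hH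
       (corr_IG tau W sig2 Rb pGmax wG wD hG alpha) (corr_IH alpha)
       (corr_ID tau W sig2 Rb pGmax wG wD hG alpha)
       (corr_pG tau W sig2 Rb pGmax wG wD hG alpha) (corr_pH tau W sig2 Rb hH alpha)
     /\ P1_obj N tau wG wD (corr_ID tau W sig2 Rb pGmax wG wD hG alpha)
          (corr_pG tau W sig2 Rb pGmax wG wD hG alpha)
        = hatP1_obj N tau W sig2 Rb pGmax wG wD hG alpha)
  /\
  (* (ii) the two problems have the same (attained) optimal value *)
  (exists v : R,
     ((exists alpha, hatP1_feasible N tau W sig2 Rb pHmax EH hH alpha /\
                     hatP1_obj N tau W sig2 Rb pGmax wG wD hG alpha = v) /\
      (forall alpha, hatP1_feasible N tau W sig2 Rb pHmax EH hH alpha ->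
                     v <= hatP1_obj N tau W sig2 Rb pGmax wG wD hG alpha)) /\
     ((exists IG IH ID pG pH,
         P1_feasible N tau W sig2 Rb pGmax pHmax EH hG hH IG IH ID pG pH /\
         P1_obj N tau wG wD ID pG = v) /\
      (forall IG IH ID pG pH,
         P1_feasible N tau W sig2 Rb pGmax pHmax EH hG hH IG IH ID pG pH ->
         v <= P1_obj N tau wG wD ID pG)))
  /\
  (* (iii) an optimal alpha of hat P1 yields an optimal solution of P1 *)
  (forall alpha : nat -> R,
     hatP1_feasible N tau W sig2 Rb pHmax EH hH alpha ->
     (forall beta, hatP1_feasible N tau W sig2 Rb pHmax EH hH beta ->
        hatP1_obj N tau W sig2 Rb pGmax wG wD hG alpha
          <= hatP1_obj N tau W sig2 Rb pGmax wG wD hG beta) ->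
     P1_feasible N tau W sig2 Rb pGmax pHmax EH hG hH
       (corr_IG tau W sig2 Rb pGmax wG wD hG alpha) (corr_IH alpha)
       (corr_ID tau W sig2 Rb pGmax wG wD hG alpha)
       (corr_pG tau W sig2 Rb pGmax wG wD hG alpha) (corr_pH tau W sig2 Rb hH alpha) /\
     (forall IG IH ID pG pH,
        P1_feasible N tau W sig2 Rb pGmax pHmax EH hG hH IG IH ID pG pH ->
        P1_obj N tau wG wD (corr_ID tau W sig2 Rb pGmax wG wD hG alpha)
          (corr_pG tau W sig2 Rb pGmax wG wD hG alpha)
        <= P1_obj N tau wG wD ID pG)).

Proof.
  pose proof (part_i N tau W sig2 Rb pGmax pHmax wG wD EH hG hH Htau HW Hsig2 HRb
    HpGmax HpHmax HwG HwD HhG HhH) as PI.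
  pose proof (lower N tau W sig2 Rb pGmax pHmax wG wD EH hG hH Htau HW Hsig2 HRb
    HwG HwD HhG HhH) as LO.
  set (F := hatP1_feasible N tau W sig2 Rb pHmax EH hH).
  set (O := hatP1_obj N tau W sig2 Rb pGmax wG wD hG).
  assert (Z : F (fun _ => 0)).
  { intros i Hi. split; [|split; [lra|left; auto]].
    apply sumR_le. intros k Hk. rewrite !Rmult_0_l. apply HEH; lia. }
  assert (OPT : exists m, F m /\ forall a, F a -> O m <= O a).
  { assert (EX : exists x, In x (enum N) /\ F x).
    { destruct (enum_complete N (fun _ => 0) ltac:(intros; left; auto)) as [g [Hg E]].
      exists g. split; auto. apply (hat_ext N tau W sig2 Rb pGmax pHmax wG wD EH hG hH _ g E). exact Z. }
    destruct (list_min F O (enum N) EX) as [m [Hm [Fm Hmin]]].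
    exists m. split; auto. intros a Fa.
      destruct (enum_complete N a ltac:(intros i Hi; apply (Fa i Hi))) as [g [Hg E]].
      destruct (hat_ext N tau W sig2 Rb pGmax pHmax wG wD EH hG hH _ g E) as [E1 E2].
      unfold O in *; rewrite <- E2. apply Hmin; [exact Hg|apply E1; exact Fa]. }
  destruct OPT as [m [Fm Hm]].
  split; [exact PI|]. split.
  - exists (O m). split.
    + split; [exists m; auto|]. exact Hm.
    + split.
      * destruct (PI m Fm) as [P1 P2]. do 5 eexists. split; [exact P1|exact P2].
      * intros IG IH ID pG pH Hf. destruct (LO _ _ _ _ _ Hf) as [L1 L2].
        pose proof (Hm IH L1). unfold O in *. lra.
  - intros alpha Fa Ha. destruct (PI alpha Fa) as [P1 P2]. split; [exact P1|].
    intros IG IH ID pG pH Hf. destruct (LO _ _ _ _ _ Hf) as [L1 L2].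
    pose proof (Ha IH L1). unfold O, F in *. rewrite P2. lra.
Qed.
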